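(* Every convex subset of $\mathbb{R}^2$ is closed-disk drawable.
   Context: For $A\subseteq\mathbb{R}^2$ let $N_{\le}(A)=\{x\in\mathbb{R}^2: |x-a|\le 1 \text{ for some } a\in A\}$. Let $\mathcal{D}_{\le,1}=\{N_{\le}(A_1): A_1\subseteq\mathbb{R}^2\}$ and for $n\ge 2$ let $\mathcal{D}_{\le,n}=\{D\cup N_{\le}(A_n): D\in\mathcal{D}_{\le,n-1}, A_n\subseteq\mathbb{R}^2\}$ if $n$ is odd and $\mathcal{D}_{\le,n}=\{D\setminus N_{\le}(A_n): D\in\mathcal{D}_{\le,n-1}, A_n\subseteq\mathbb{R}^2\}$ if $n$ is even. A set is closed-disk drawable if it lies in $\mathcal{D}_{\le}=\bigcup_{n\ge1}\mathcal{D}_{\le,n}$. *)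

(* Defs.v *)
From Stdlib Require Import Reals.
Open Scope R_scope.

Definition pt := (R * R)%type.
Definition pset := pt -> Prop.

Definition dist2 (x a : pt) : R :=
  sqrt ((fst x - fst a)^2 + (snd x - snd a)^2).

Definition Nle (A : pset) : pset :=
  fun x => exists a, A a /\ dist2 x a <= 1.

(* Dle n S  :<->  S belongs to D_{<=,n}  (D_{<=,0} is empty; sets are
   compared extensionally). *)
Fixpoint Dle (n : nat) : pset -> Prop :=
  match n with
  | O => fun _ => False
  | S O => fun S0 => exists A : pset, forall x, S0 x <-> Nle A x
  | S m as k => fun S0 => exists (D A : pset), Dle m D /\
      (forall x, S0 x <->
         (if Nat.even k then (D x /\ ~ Nle A x) else (D x \/ Nle A x)))
  end.

Definition closed_disk_drawable (S0 : pset) : Prop :=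
  exists n, (1 <= n)%nat /\ Dle n S0.

Definition convex (C : pset) : Prop :=
  forall x y t, C x -> C y -> 0 <= t <= 1 ->
    C (t * fst x + (1 - t) * fst y, t * snd x + (1 - t) * snd y).

(* Main.v *)
Require Import Defs.
From Stdlib Require Import Reals.
From Stdlib Require Import Lra Psatz Classical.
Open Scope R_scope.

Lemma conv_pt (C : pset) x y t p1 p2 : convex C -> C x -> C y -> 0 <= t <= 1 ->
  p1 = t * fst x + (1 - t) * fst y -> p2 = t * snd x + (1 - t) * snd y -> C (p1, p2).
Proof. intros HC Hx Hy Ht -> ->. now apply HC. Qed.

Lemma sepC (C : pset) (HC : convex C) (H0 : ~ C (0,0)) z0 (Hz0 : C (z0,0)) (Hz0p : 0 < z0)
  c1 c2 d1 d2 (Hc : C (c1,c2)) (Hc2 : 0 < c2) (Hd : C (d1,d2)) (Hd2 : d2 < 0) :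
  exists u1 u2, (u1 <> 0 \/ u2 <> 0) /\ forall p1 p2, C (p1,p2) -> p1*u1 + p2*u2 <= 0.
Proof.
  assert (axis : forall w1, C (w1,0) -> 0 < w1).
  { intros w1 Hw. destruct (Rlt_le_dec 0 w1) as [h|h]; [exact h|].
    destruct (Req_dec w1 0) as [e|e]. { subst. contradiction. }
    exfalso. apply H0.
    apply (conv_pt C (w1,0) (z0,0) (z0/(z0-w1))); auto; simpl.
    - split. apply Rmult_le_pos; [lra| left; apply Rinv_0_lt_compat; lra].
      apply (Rmult_le_reg_r (z0 - w1)); [lra|]. field_simplify; lra.
    - field. lra.
    - ring. }
  assert (slope : forall p1 p2 q1 q2, C (p1,p2) -> 0 < p2 -> C (q1,q2) -> q2 < 0 ->
            q1/q2 <= p1/p2).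
  { intros p1 p2 q1 q2 Hp Hp2 Hq Hq2.
    set (t := - q2 / (p2 - q2)).
    assert (Ht : 0 <= t <= 1).
    { unfold t. split. apply Rmult_le_pos; [lra| left; apply Rinv_0_lt_compat; lra].
      apply (Rmult_le_reg_r (p2 - q2)); [lra|]. field_simplify; lra. }
    assert (Hw : C (t*p1 + (1-t)*q1, 0)).
    { apply (conv_pt C (p1,p2) (q1,q2) t); auto. simpl. unfold t. field. lra. }
    apply axis in Hw.
    assert (E : (t*p1 + (1-t)*q1) * (p2 - q2) = p2*q1 - q2*p1) by (unfold t; field; lra).
    assert (Hpos : 0 < p2*q1 - q2*p1) by (rewrite <- E; apply Rmult_lt_0_compat; lra).
    assert (Hdiff : p1/p2 - q1/q2 = (p2*q1 - q2*p1) * (/ p2 * / (- q2))) by (field; lra).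
    assert (0 < /p2) by (apply Rinv_0_lt_compat; lra).
    assert (0 < / (- q2)) by (apply Rinv_0_lt_compat; lra).
    assert (0 <= p1/p2 - q1/q2). { rewrite Hdiff. left. apply Rmult_lt_0_compat; auto.
      apply Rmult_lt_0_compat; auto. }
    lra. }
  set (E := fun r => exists q1 q2, C (q1,q2) /\ q2 < 0 /\ r = q1/q2).
  destruct (completeness E) as [lam [Hub Hlub]].
  { exists (c1/c2). intros r [q1 [q2 [Hq [Hq2 ->]]]]. now apply slope. }
  { exists (d1/d2). exists d1, d2. auto. }
  exists (-1), lam. split; [left; lra|].
  intros p1 p2 Hp. destruct (Rtotal_order p2 0) as [h|[h|h]].
  - assert (p1/p2 <= lam) by (apply Hub; exists p1, p2; auto).
    assert (p2 * (p1/p2) = p1) by (field; lra).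
    nra.
  - subst. apply axis in Hp. lra.
  - assert (lam <= p1/p2).
    { apply Hlub. intros r [q1 [q2 [Hq [Hq2 ->]]]]. now apply slope. }
    assert (p2 * (p1/p2) = p1) by (field; lra).
    nra.
Qed.

Lemma sep0 (C : pset) (HC : convex C) (H0 : ~ C (0,0)) :
  exists u1 u2, (u1 <> 0 \/ u2 <> 0) /\ forall p1 p2, C (p1,p2) -> p1*u1 + p2*u2 <= 0.
Proof.
  destruct (classic (exists d1 d2, C (d1,d2) /\ d2 < 0)) as [[d1 [d2 [Hd Hd2]]]|Hn].
  2:{ exists 0, (-1). split; [right; lra|]. intros p1 p2 Hp.
      destruct (Rlt_le_dec p2 0) as [h|h]; [exfalso; apply Hn; eauto|]. lra. }
  destruct (classic (exists c1 c2, C (c1,c2) /\ 0 < c2)) as [[c1 [c2 [Hc Hc2]]]|Hn].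
  2:{ exists 0, 1. split; [right; lra|]. intros p1 p2 Hp.
      destruct (Rlt_le_dec 0 p2) as [h|h]; [exfalso; apply Hn; eauto|]. lra. }
  set (t := - d2 / (c2 - d2)).
  assert (Ht : 0 <= t <= 1).
  { unfold t. split. apply Rmult_le_pos; [lra| left; apply Rinv_0_lt_compat; lra].
    apply (Rmult_le_reg_r (c2 - d2)); [lra|]. field_simplify; lra. }
  set (w := t*c1 + (1-t)*d1).
  assert (Hw : C (w, 0)).
  { apply (conv_pt C (c1,c2) (d1,d2) t); auto. simpl. unfold t. field. lra. }
  destruct (Rtotal_order w 0) as [h|[h|h]].
  - set (C' := fun p : pt => C (- fst p, snd p)).
    assert (HC' : convex C').
    { intros x y s Hx Hy Hs. unfold C' in *. simpl.
      apply (conv_pt C (- fst x, snd x) (- fst y, snd y) s); auto; simpl; ring. }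
    destruct (sepC C' HC') with (z0 := -w) (c1 := -c1) (c2 := c2) (d1 := -d1) (d2 := d2)
      as [u1 [u2 [Hu Hs]]]; unfold C'; simpl; rewrite ?Ropp_involutive, ?Ropp_0; auto; try lra.
    exists (-u1), u2. split. { destruct Hu; [left|right]; lra. }
    intros p1 p2 Hp. specialize (Hs (-p1) p2). unfold C' in Hs; simpl in Hs.
    rewrite Ropp_involutive in Hs. specialize (Hs Hp). lra.
  - rewrite h in Hw. contradiction.
  - exact (sepC C HC H0 w Hw h c1 c2 d1 d2 Hc Hc2 Hd Hd2).
Qed.

Lemma sep (C : pset) (HC : convex C) x1 x2 (Hx : ~ C (x1,x2)) :
  exists u1 u2, (u1 <> 0 \/ u2 <> 0) /\
    forall p1 p2, C (p1,p2) -> (p1 - x1)*u1 + (p2 - x2)*u2 <= 0.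
Proof.
  set (C' := fun p : pt => C (fst p + x1, snd p + x2)).
  assert (HC' : convex C').
  { intros x y s Hx' Hy Hs. unfold C' in *. simpl.
    apply (conv_pt C (fst x + x1, snd x + x2) (fst y + x1, snd y + x2) s); auto; simpl; ring. }
  destruct (sep0 C' HC') as [u1 [u2 [Hu Hs]]].
  { unfold C'; simpl. rewrite !Rplus_0_l. exact Hx. }
  exists u1, u2. split; auto. intros p1 p2 Hp. apply Hs. unfold C'; simpl.
  replace (p1 - x1 + x1) with p1 by ring. replace (p2 - x2 + x2) with p2 by ring. exact Hp.
Qed.

Theorem theorem2p4 : forall C : pset, convex C -> closed_disk_drawable C.
Proof.
  intros C HC. exists 2%nat. split; [auto|]. simpl.
  exists (Nle C), (fun y => forall z, C z -> 1 < dist2 z y). split.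
  { exists C. tauto. }
  intros [x1 x2]. split.
  - intros Hx. split.
    + exists (x1,x2). split; auto. unfold dist2; cbn [fst snd].
      replace ((x1 - x1)^2 + (x2 - x2)^2) with 0 by ring. rewrite sqrt_0. lra.
    + intros [a [Ha Hd]]. specialize (Ha _ Hx). lra.
  - intros [_ HN]. apply NNPP. intros Hx.
    destruct (sep C HC x1 x2 Hx) as [u1 [u2 [Hu Hs]]].
    assert (Hpos : 0 < u1^2 + u2^2) by (destruct Hu; nra).
    set (n := sqrt (u1^2 + u2^2)).
    assert (Hn : 0 < n) by (apply sqrt_lt_R0; exact Hpos).
    assert (Hn2 : n * n = u1^2 + u2^2) by (apply sqrt_sqrt; lra).
    set (e1 := u1 / n). set (e2 := u2 / n).
    assert (He : e1^2 + e2^2 = 1).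
    { unfold e1, e2. field_simplify; [|lra]. rewrite <- Hn2. field. lra. }
    apply HN. exists (x1 + e1, x2 + e2). split.
    + intros [z1 z2] Hz. unfold dist2; cbn [fst snd].
      assert (Hw : (z1 - x1)*e1 + (z2 - x2)*e2 <= 0).
      { specialize (Hs z1 z2 Hz). unfold e1, e2.
        replace ((z1 - x1) * (u1 / n) + (z2 - x2) * (u2 / n))
          with (((z1 - x1) * u1 + (z2 - x2) * u2) * / n) by (field; lra).
        assert (0 < / n) by (apply Rinv_0_lt_compat; lra). nra. }
      assert (Hne : z1 - x1 <> 0 \/ z2 - x2 <> 0).
      { destruct (Req_dec (z1 - x1) 0); destruct (Req_dec (z2 - x2) 0); auto.
        exfalso. apply Hx. replace x1 with z1 by lra. replace x2 with z2 by lra. exact Hz. }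
      assert (Hgt : 1 < (z1 - (x1 + e1))^2 + (z2 - (x2 + e2))^2).
      { assert (Eq : (z1 - (x1 + e1))^2 + (z2 - (x2 + e2))^2 =
           ((z1 - x1)^2 + (z2 - x2)^2) - 2*((z1 - x1)*e1 + (z2 - x2)*e2) + (e1^2 + e2^2)) by ring.
        assert (0 < (z1 - x1)^2 + (z2 - x2)^2).
        { destruct Hne as [h|h].
          - assert (0 < (z1-x1)^2) by (rewrite <- Rsqr_pow2; apply Rsqr_pos_lt; exact h). pose proof (pow2_ge_0 (z2-x2)). lra.
          - assert (0 < (z2-x2)^2) by (rewrite <- Rsqr_pow2; apply Rsqr_pos_lt; exact h). pose proof (pow2_ge_0 (z1-x1)). lra. }
        lra. }
      rewrite <- sqrt_1. apply sqrt_lt_1; lra.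
    + unfold dist2; cbn [fst snd].
      replace ((x1 - (x1 + e1))^2 + (x2 - (x2 + e2))^2) with (e1^2 + e2^2) by ring.
      rewrite He, sqrt_1. lra.
Qed.
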